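(* Let $U$ be a Banach space with norm $\|\cdot\|$, $V$ a Hilbert space, $\psi:U\times V\to V$, and $(\bar u,\bar v)$ in the interior of the domain of $\psi$ with $\psi(\bar u,\bar v)=0$. Assume (a) there are neighborhoods ${\cal B}_U$ of $\bar u$ and ${\cal B}_V$ of $\bar v$ such that $\psi$ is continuous on ${\cal B}_U\times{\cal B}_V$; (b) $\psi(u,\cdot)$ is strongly monotone on ${\cal B}_V$ uniformly in $u\in{\cal B}_U$, i.e. there is $\tau>0$ with $\langle\psi(u,v_1)-\psi(u,v_2),v_1-v_2\rangle\ge\tau\|v_1-v_2\|^2$ for all $v_1,v_2\in{\cal B}_V$, $u\in{\cal B}_U$; (c) $\psi(\cdot,v)$ is Lipschitz continuous on $U$ uniformly in $v\in{\cal B}_V$. Then, with $S(u):=\{v\in V:\psi(u,v)=0\}$ for $u\in U$: (i) $S$ has a single-valued localization around $\bar u$ for $\bar v$; (ii) this localization is Lipschitz continuous around $\bar u$.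
   Context: A set-valued map $S:U\rightrightarrows V$ has a single-valued localization around $\bar u$ for $\bar v\in S(\bar u)$ if there are neighborhoods $W$ of $\bar u$ and $O$ of $\bar v$ such that $u\mapsto S(u)\cap O$ is single-valued on $W$ (in particular $W\subset\operatorname{dom}S$); it is Lipschitz continuous around $\bar u$ if this single-valued map is Lipschitz on $W$. *)

(* Defs.v *)
From HB Require Import structures.
From mathcomp Require Import all_boot all_order all_algebra.
From mathcomp Require Import all_classical all_reals all_analysis.
Set Implicit Arguments. Unset Strict Implicit. Unset Printing Implicit Defensive.
Import Order.TTheory GRing.Theory Num.Theory.
Import numFieldNormedType.Exports.
Local Open Scope classical_set_scope.
Local Open Scope ring_scope.

(* A real Hilbert space: a complete normed space V whose norm comes from
   the (real, symmetric, bilinear) inner product [ip]. *)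
Definition is_inner_product (R : realType) (V : completeNormedModType R)
  (ip : V -> V -> R) : Prop :=
  (forall x y, ip x y = ip y x) /\
  (forall a x y z, ip (a *: x + y) z = a * ip x z + ip y z) /\
  (forall x, ip x x = `|x| ^+ 2).

Definition sv_localization_on (R : realType) (U V : normedModType R)
  (S : U -> set V) (ubar : U) (vbar : V) (W : set U) (O : set V) : Prop :=
  nbhs ubar W /\ nbhs vbar O /\
  forall u, W u -> exists! v, S u v /\ O v.

Definition has_sv_localization (R : realType) (U V : normedModType R)
  (S : U -> set V) (ubar : U) (vbar : V) : Prop :=
  S ubar vbar /\ exists W O, sv_localization_on S ubar vbar W O.

Definition has_lipschitz_sv_localization (R : realType) (U V : normedModType R)
  (S : U -> set V) (ubar : U) (vbar : V) : Prop :=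
  S ubar vbar /\ exists W O, sv_localization_on S ubar vbar W O /\
  exists L : R, forall u1 u2 v1 v2, W u1 -> W u2 ->
    S u1 v1 -> O v1 -> S u2 v2 -> O v2 -> `|v1 - v2| <= L * `|u1 - u2|.

(* Main.v *)
Require Import Defs.
From HB Require Import structures.
From mathcomp Require Import all_boot all_order all_algebra.
From mathcomp Require Import all_classical all_reals all_analysis.
From mathcomp Require Import ring lra.
Import Order.TTheory GRing.Theory Num.Theory.
Import numFieldNormedType.Exports.
Local Open Scope classical_set_scope.
Local Open Scope ring_scope.

Section IP.
Variables (R : realType) (V : completeNormedModType R) (ip : V -> V -> R).
Hypothesis hip : is_inner_product ip.

Lemma ipC x y : ip x y = ip y x.
Proof. by case: hip. Qed.
Lemma ipxx x : ip x x = `|x| ^+ 2.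
Proof. by case: hip => _ []. Qed.
Lemma ipL a x y z : ip (a *: x + y) z = a * ip x z + ip y z.
Proof. by case: hip => _ []. Qed.
Lemma ip0l z : ip 0 z = 0.
Proof.
have h := ipL 1 0 0 z; rewrite scaler0 addr0 mul1r in h; lra.
Qed.
Lemma ipDl x y z : ip (x + y) z = ip x z + ip y z.
Proof. by have := ipL 1 x y z; rewrite scale1r mul1r. Qed.
Lemma ipZl a x z : ip (a *: x) z = a * ip x z.
Proof. by rewrite -[a *: x]addr0 ipL ip0l addr0. Qed.
Lemma ipNl x z : ip (- x) z = - ip x z.
Proof. by rewrite -scaleN1r ipZl mulN1r. Qed.
Lemma ip0r z : ip z 0 = 0.
Proof. by rewrite ipC ip0l. Qed.
Lemma ipDr x y z : ip z (x + y) = ip z x + ip z y.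
Proof. by rewrite ipC ipDl !(ipC z). Qed.
Lemma ipZr a x z : ip z (a *: x) = a * ip z x.
Proof. by rewrite ipC ipZl ipC. Qed.
Lemma ipNr x z : ip z (- x) = - ip z x.
Proof. by rewrite ipC ipNl ipC. Qed.

Lemma ip_ge0 x : 0 <= ip x x.
Proof. by rewrite ipxx exprn_ge0. Qed.

Lemma ip_CS x y : ip x y <= `|x| * `|y|.
Proof.
have [->|nx] := eqVneq x 0; first by rewrite ip0l normr0 mul0r.
have [->|ny] := eqVneq y 0; first by rewrite ip0r normr0 mulr0.
have := ip_ge0 (`|y| *: x - `|x| *: y).
rewrite !(ipDl, ipDr, ipNl, ipNr, ipZl, ipZr) !ipxx (ipC y x) => h.
have hp : 0 < `|x| * `|y| by rewrite mulr_gt0 // normr_gt0.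
have : (`|x| * `|y|) * ip x y <= (`|x| * `|y|) * (`|x| * `|y|) by nra.
by rewrite ler_pM2l.
Qed.


Definition lam (s : seq (R * V)) := \sum_(q <- s) q.1.
Definition Wm (s : seq (R * V)) := \sum_(q <- s) q.1 *: q.2.
Definition Am (a : V -> V) (s : seq (R * V)) := \sum_(q <- s) q.1 *: a q.2.
Definition M1 (a : V -> V) (s : seq (R * V)) := \sum_(q <- s) q.1 * ip (a q.2) q.2.

Lemma ip_suml (s : seq (R * V)) (f : R * V -> V) z :
  ip (\sum_(q <- s) f q) z = \sum_(q <- s) ip (f q) z.
Proof.
elim: s => [|q s IH]; first by rewrite !big_nil ip0l.
by rewrite !big_cons ipDl IH.
Qed.

Lemma inner_id a (s : seq (R * V)) w :
  \sum_(q <- s) q.1 * ip (a q.2 - a w) (q.2 - w) =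
  M1 a s - ip (Am a s) w - ip (a w) (Wm s) + lam s * ip (a w) w.
Proof.
rewrite /M1 /Am /Wm /lam.
elim: s => [|q s IH]; first by rewrite !big_nil ip0l ip0r; ring.
rewrite !big_cons IH.
rewrite !(ipDl, ipDr, ipNl, ipNr, ipZl, ipZr); ring.
Qed.

Lemma step_id a l w (s : seq (R * V)) :
  lam ((l, w) :: s) * M1 a ((l, w) :: s) - ip (Am a ((l, w) :: s)) (Wm ((l, w) :: s))
  = (lam s * M1 a s - ip (Am a s) (Wm s)) +
    l * (M1 a s - ip (Am a s) w - ip (a w) (Wm s) + lam s * ip (a w) w).
Proof.
rewrite /M1 /Am /Wm /lam !big_cons /=.
rewrite !(ipDl, ipDr, ipNl, ipNr, ipZl, ipZr); ring.
Qed.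

Lemma gen_ineq (K : set V) (a : V -> V) (c : R)
  (hmon : forall x y, K x -> K y -> c * ip (x - y) (x - y) <= ip (a x - a y) (x - y))
  (s : seq (R * V)) :
  (forall q, q \in s -> 0 <= q.1 /\ K q.2) ->
  c * (lam s * M1 id s - ip (Wm s) (Wm s)) <= lam s * M1 a s - ip (Am a s) (Wm s).
Proof.
elim: s => [|[l w] s IH] hs.
  by rewrite /lam /M1 /Am /Wm !big_nil ip0l !mul0r subr0 mulr0.
have hs' : forall q, q \in s -> 0 <= q.1 /\ K q.2.
  by move=> q qs; apply: hs; rewrite in_cons qs orbT.
have [hl hw] : 0 <= l /\ K w by apply: (hs (l, w)); rewrite in_cons eqxx.
have e1 := step_id a l w s.
have e2 := step_id id l w s.
have -> : Wm ((l, w) :: s) = Am id ((l, w) :: s) by [].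
rewrite e1 e2 -/(Am id s) mulrDr lerD //.
  by move: (IH hs'); rewrite /Am /Wm.
rewrite -!inner_id mulrCA ler_wpM2l // mulr_sumr big_seq [X in _ <= X]big_seq.
apply: ler_sum => q qs.
rewrite mulrCA ler_wpM2l //; first by case: (hs' q qs).
by apply: hmon => //; case: (hs' q qs).
Qed.


Section Phi.
Variables (F : V -> V) (tau : R).
Hypothesis tau_gt0 : 0 < tau.

Definition zc s := Wm s - tau^-1 *: Am F s.
Definition Phi s := M1 F s - tau / 2 * M1 id s + tau / 2 * ip (zc s) (zc s).

Lemma Phi_alt s : Phi s = (M1 F s - ip (Am F s) (Wm s)) - tau / 2 * (M1 id s - ip (Wm s) (Wm s))
   + tau^-1 / 2 * ip (Am F s) (Am F s).
Proof.
rewrite /Phi /zc !(ipDl, ipDr, ipNl, ipNr, ipZl, ipZr) (ipC (Wm s) (Am F s)).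
by field; rewrite lt0r_neq0.
Qed.

Definition valid (K : set V) (s : seq (R * V)) :=
  lam s = 1 /\ forall q, q \in s -> 0 <= q.1 /\ K q.2.

Lemma Phi_ge0 (K : set V)
  (hmon : forall x y, K x -> K y -> tau * ip (x - y) (x - y) <= ip (F x - F y) (x - y))
  s : valid K s -> 0 <= Phi s.
Proof.
move=> [hl hs].
have h1 := @gen_ineq K F tau hmon s hs.
have h2 : 0 * ip (Wm s) (Wm s) <= lam s * M1 id s - ip (Am id s) (Wm s).
  have := @gen_ineq K id 0 _ s hs; rewrite !mul0r; apply.
  by move=> x y _ _; rewrite mul0r ip_ge0.
rewrite hl !mul1r in h1 h2; rewrite mul0r in h2.
have h3 := ip_ge0 (Am F s).
have h4 : 0 <= tau^-1 / 2 * ip (Am F s) (Am F s).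
  by rewrite mulr_ge0 // divr_ge0 // invr_ge0 ltW.
rewrite Phi_alt.
have : Am id s = Wm s by []. move=> e; rewrite e in h2.
set P := M1 F s - _ in h1 *; set Q := M1 id s - _ in h1 h2 *.
have h5 : 0 <= tau * Q by rewrite mulr_ge0 // ltW.
have -> : tau / 2 * Q = (tau * Q) / 2 by ring.
lra.
Qed.

Definition mix (t : R) (s1 s2 : seq (R * V)) :=
  [seq ((1 - t) * q.1, q.2) | q <- s1] ++ [seq (t * q.1, q.2) | q <- s2].

Lemma sumR_mix t s1 s2 (g : V -> R) :
  \sum_(q <- mix t s1 s2) q.1 * g q.2 =
  (1 - t) * \sum_(q <- s1) q.1 * g q.2 + t * \sum_(q <- s2) q.1 * g q.2.
Proof.
rewrite big_cat !big_map /= !mulr_sumr; congr (_ + _); apply: eq_bigr => q _;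
  by rewrite mulrA.
Qed.

Lemma sumV_mix t s1 s2 (g : V -> V) :
  \sum_(q <- mix t s1 s2) q.1 *: g q.2 =
  (1 - t) *: \sum_(q <- s1) q.1 *: g q.2 + t *: \sum_(q <- s2) q.1 *: g q.2.
Proof.
rewrite big_cat !big_map /= !scaler_sumr; congr (_ + _); apply: eq_bigr => q _;
  by rewrite scalerA.
Qed.

Lemma lam_mix t s1 s2 : lam (mix t s1 s2) = (1 - t) * lam s1 + t * lam s2.
Proof.
rewrite /lam big_cat !big_map /= !mulr_sumr //.
Qed.

Lemma Wm_mix t s1 s2 : Wm (mix t s1 s2) = (1 - t) *: Wm s1 + t *: Wm s2.
Proof. exact: (sumV_mix t s1 s2 id). Qed.
Lemma Am_mix t s1 s2 : Am F (mix t s1 s2) = (1 - t) *: Am F s1 + t *: Am F s2.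
Proof. exact: (sumV_mix t s1 s2 F). Qed.
Lemma M1_mix a t s1 s2 : M1 a (mix t s1 s2) = (1 - t) * M1 a s1 + t * M1 a s2.
Proof. exact: (sumR_mix t s1 s2 (fun x => ip (a x) x)). Qed.

Lemma zc_mix t s1 s2 : zc (mix t s1 s2) = (1 - t) *: zc s1 + t *: zc s2.
Proof.
rewrite /zc Wm_mix Am_mix scalerDr !scalerBr !scalerA (mulrC tau^-1 (1 - t)) (mulrC tau^-1 t).
by rewrite opprD addrACA.
Qed.

Lemma Phi_mix t s1 s2 : Phi (mix t s1 s2) =
  (1 - t) * Phi s1 + t * Phi s2 - tau / 2 * (t * (1 - t)) * ip (zc s1 - zc s2) (zc s1 - zc s2).
Proof.
rewrite /Phi zc_mix !M1_mix.
move: (zc s1) (zc s2) => z1 z2.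
rewrite !(ipDl, ipDr, ipNl, ipNr, ipZl, ipZr) ?(ipC z2 z1); ring.
Qed.

Lemma valid_mix K t s1 s2 : 0 <= t <= 1 -> valid K s1 -> valid K s2 -> valid K (mix t s1 s2).
Proof.
move=> /andP[t0 t1] [l1 h1] [l2 h2]; split.
  by rewrite lam_mix l1 l2; ring.
move=> q; rewrite mem_cat => /orP[] /mapP[q' q's ->] /=.
  by case: (h1 q' q's) => ??; split => //; rewrite mulr_ge0 // subr_ge0.
by case: (h2 q' q's) => ??; split => //; rewrite mulr_ge0.
Qed.

Definition pt (w : V) : seq (R * V) := [:: (1, w)].

Lemma valid_pt K w : K w -> valid K (pt w).
Proof.
move=> kw; split; first by rewrite /lam big_cons big_nil addr0.
by move=> q; rewrite inE => /eqP -> /=; split.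
Qed.

Lemma Phi_pt w v : Phi (pt w) - tau / 2 * ip (v - zc (pt w)) (v - zc (pt w)) =
  ip (F w) (w - v) - tau / 2 * ip (w - v) (w - v).
Proof.
rewrite /Phi /zc /M1 /Wm /Am /pt !big_cons !big_nil /= !addr0 !scale1r !mul1r.
rewrite !(ipDl, ipDr, ipNl, ipNr, ipZl, ipZr) (ipC w (F w)) (ipC v w) (ipC v (F w)).
by field; rewrite lt0r_neq0.
Qed.

End Phi.


Section Exist.
Variables (F : V -> V) (tau : R) (K : set V) (w0 : V).
Hypothesis tau_gt0 : 0 < tau.
Hypothesis hmon : forall x y, K x -> K y -> tau * ip (x - y) (x - y) <= ip (F x - F y) (x - y).
Hypothesis Kw0 : K w0.

Lemma exists_sol : exists p, forall w, K w ->
  0 <= ip (F w) (w - p) - tau / 2 * ip (w - p) (w - p).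
Proof.
pose E := [set x | exists2 s, valid K s & Phi F tau s = x].
have E0 : E (Phi F tau (pt w0)) by exists (pt w0) => //; apply: valid_pt.
have Elb : lbound E 0 by move=> x [s vs <-]; exact: (@Phi_ge0 F tau tau_gt0 K hmon s vs).
have hinf : has_inf E by split; [exists (Phi F tau (pt w0)) | exists 0].
pose m := inf E.
have hm0 : 0 <= m by apply: lb_le_inf => //; exists (Phi F tau (pt w0)).
have hmle : forall s, valid K s -> m <= Phi F tau s.
  by move=> s vs; apply: (ge_inf (proj2 hinf)); exists s.
have approx : forall n : nat, exists s, valid K s /\ Phi F tau s < m + harmonic n.
  move=> n; have [x [s vs <-] hx] := inf_adherent (harmonic_gt0 n) hinf.
  by exists s.
have [sq hsq] := choice approx.
pose z n := zc F tau (sq n).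
have hcb : forall n k, tau / 8 * ip (z n - z k) (z n - z k) < (harmonic n + harmonic k) / 2.
  move=> n k.
  have [vn hn] := hsq n; have [vk hk] := hsq k.
  pose hf : R := 2^-1.
  have h01 : 0 <= hf <= 1 by apply/andP; split; rewrite /hf; lra.
  have h := hmle _ (@valid_mix _ _ _ _ h01 vn vk).
  rewrite Phi_mix /hf in h.
  rewrite /z; lra.
have hcauchy : cauchy_ex (z @ \oo).
  move=> e e0.
  have c0 : 0 < tau * e ^+ 2 / 8 by rewrite !mulr_gt0 // exprn_gt0.
  have := @cvg_harmonic R; move=> /cvgr_lt /(_ _ c0) [N _ HN].
  exists (z N); exists N => // n /= hNn.
  rewrite -ball_normE /ball_ /=.
  have h1 := hcb N n; have h2 := HN N (leqnn N); have h3 := HN n hNn.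
  rewrite ipxx in h1.
  have h4 : tau * `|z N - z n| ^+ 2 < tau * e ^+ 2 by lra.
  rewrite ltr_pM2l // in h4.
  rewrite ltNge; apply/negP => he.
  have he0 : 0 <= `|z N - z n| by [].
  nra.
have hc : cvg (z @ \oo) by apply: cauchy_cvg; apply: cauchy_exP.
exists (lim (z @ \oo)); set p := lim (z @ \oo).
move=> w Kw.
pose zw := zc F tau (pt w); pose Pw := Phi F tau (pt w).
have hPw0 : 0 <= Pw := @Phi_ge0 F tau tau_gt0 K hmon _ (@valid_pt _ _ Kw).
pose N := `|p - zw| * `|p - zw|.
have ht : forall t, 0 < t <= 1 -> 0 <= t * Pw - tau / 2 * (t * (1 - t)) * N.
  move=> t /andP[t0 t1].
  have hn : forall n, 0 <= t * Pw - tau / 2 * (t * (1 - t)) * (`|z n - zw| * `|z n - zw|) + harmonic n.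
    move=> n; have [vn hn] := hsq n.
    have h01 : 0 <= t <= 1 by rewrite ltW.
    have h := hmle _ (@valid_mix _ _ _ _ h01 vn (@valid_pt _ _ Kw)).
    rewrite Phi_mix -/(z n) -/zw -/Pw ipxx expr2 in h.
    have f1 : (1 - t) * Phi F tau (sq n) <= (1 - t) * (m + harmonic n).
      by rewrite ler_wpM2l ?subr_ge0 // ltW.
    have f2 : 0 <= t * m by rewrite mulr_ge0 // ltW.
    have f3 : 0 <= t * harmonic n by rewrite mulr_ge0 // ltW // harmonic_gt0.
    lra.
  have hd : (fun n => `|z n - zw|) @ \oo --> `|p - zw|.
    by apply: cvg_norm; apply: cvgB => //; exact: cvg_cst.
  have hu : (fun n => t * Pw - tau / 2 * (t * (1 - t)) * (`|z n - zw| * `|z n - zw|) + harmonic n)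
      @ \oo --> (t * Pw - tau / 2 * (t * (1 - t)) * N + 0).
    apply: cvgD; last exact: cvg_harmonic.
    apply: cvgB; first exact: cvg_cst.
    apply: cvgM; first exact: cvg_cst.
    rewrite /N; exact: (cvgM hd hd).
  rewrite -[X in 0 <= X]addr0.
  apply: (closed_cvg [set x : R | 0 <= x] (@closed_ge R 0) _ _ hu).
  by apply: nearW => n; apply: hn.
have hfin : 0 <= Pw - tau / 2 * N.
  rewrite leNgt; apply/negP => hneg.
  pose B := tau / 2 * N.
  have hB : B = tau / 2 * N by [].
  have B0 : 0 < B by lra.
  pose t := (B - Pw) / (2 * B).
  have htB : t * B = (B - Pw) / 2 by rewrite /t; field; rewrite lt0r_neq0.
  have t0 : 0 < t by rewrite /t divr_gt0 //; lra.
  have t1 : t <= 1.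
    rewrite /t ler_pdivrMr; last lra.
    lra.
  have := ht t; rewrite t0 t1 => /(_ isT).
  have -> : t * Pw - tau / 2 * (t * (1 - t)) * N = t * (Pw - B + t * B) by rewrite /B; ring.
  rewrite pmulr_rge0 // htB.
  lra.
have := @Phi_pt F tau tau_gt0 w p.
rewrite -/zw -/Pw ipxx expr2 -/N => <-.
exact: hfin.
Qed.

End Exist.

End IP.

Lemma ballN (R : realType) (T : normedModType R) (x y : T) e : ball x e y = (`|x - y| < e).
Proof. by rewrite -ball_normE. Qed.

Theorem theorem8 (R : realType) (U V : completeNormedModType R)
  (ip : V -> V -> R) (hV : is_inner_product ip)
  (psi : U * V -> V) (ubar : U) (vbar : V)
  (hzero : psi (ubar, vbar) = 0)
  (BU : set U) (BV : set V) (hBU : nbhs ubar BU) (hBV : nbhs vbar BV)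
  (hcont : {within BU `*` BV, continuous psi})
  (hmono : exists tau : R, 0 < tau /\
     forall u v1 v2, BU u -> BV v1 -> BV v2 ->
       ip (psi (u, v1) - psi (u, v2)) (v1 - v2) >= tau * `|v1 - v2| ^+ 2)
  (hlip : exists L : R, forall v u1 u2, BV v ->
       `|psi (u1, v) - psi (u2, v)| <= L * `|u1 - u2|) :
  let S := fun u : U => [set v : V | psi (u, v) = 0] in
  has_sv_localization S ubar vbar /\ has_lipschitz_sv_localization S ubar vbar.
Proof.
move=> S.
case: hmono => tau [tau0 hmon].
case: hlip => L0 hL0.
pose L := `|L0|.
have L0le : 0 <= L by rewrite /L normr_ge0.
have hL : forall v u1 u2, BV v -> `|psi (u1, v) - psi (u2, v)| <= L * `|u1 - u2|.
  move=> v u1 u2 hv; apply: le_trans (hL0 v u1 u2 hv) _.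
  by rewrite ler_wpM2r // ler_norm.
move: hBU => /nbhs_ballP [rho rho0 hrho].
move: hBV => /nbhs_ballP [r r0 hr].
pose r' := r / 2.
have r'0 : 0 < r' by rewrite /r' divr_gt0.
pose rho' := Num.min rho (tau * r / (4 * (L + 1))).
have rho'0 : 0 < rho' by rewrite lt_min rho0 /= !mulr_gt0 // ?invr_gt0 // mulr_gt0 //; lra.
have rho'le : rho' <= rho by rewrite ge_min lexx.
have rho'le2 : rho' <= tau * r / (4 * (L + 1)) by rewrite ge_min lexx orbT.
pose W := ball ubar rho'.
pose O := ball vbar r'.
have WBU : forall u, W u -> BU u by move=> u hu; apply: hrho; apply: le_ball hu.
have OBV : forall v, O v -> BV v.
  move=> v hv; apply: hr; apply: le_ball hv; rewrite /r'.
  have r0' : 0 < (r : R) := r0. have hh : (r : R) / 2 <= r by lra. exact: hh.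
have ipn : forall x : V, ip x x = `|x| ^+ 2 by move=> x; apply: (@ipxx R V ip hV).
have uniq : forall u1 u2 v1 v2, W u1 -> W u2 -> O v1 -> O v2 ->
    psi (u1, v1) = 0 -> psi (u2, v2) = 0 -> tau * `|v1 - v2| <= L * `|u1 - u2|.
  move=> u1 u2 v1 v2 hu1 hu2 hv1 hv2 e1 e2.
  have h := hmon u1 v1 v2 (WBU _ hu1) (OBV _ hv1) (OBV _ hv2).
  have eq : psi (u1, v1) - psi (u1, v2) = psi (u2, v2) - psi (u1, v2) by rewrite e1 e2.
  rewrite eq in h.
  have h2 := @ip_CS R V ip hV (psi (u2, v2) - psi (u1, v2)) (v1 - v2).
  have h3 := hL v2 u2 u1 (OBV _ hv2).

  have d0 : 0 <= `|v1 - v2| by [].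
  have [dz|dp] := eqVneq `|v1 - v2| 0.
    by rewrite dz mulr0 mulr_ge0.
  have dp' : 0 < `|v1 - v2| by rewrite lt0r dp.
  have : tau * `|v1 - v2| * `|v1 - v2| <= L * `|u1 - u2| * `|v1 - v2|.
    apply: le_trans (_ : `|psi (u2, v2) - psi (u1, v2)| * `|v1 - v2| <= _).
      by rewrite -mulrA -expr2; apply: le_trans h h2.
    by rewrite ler_wpM2r // (distrC u1 u2).
  by rewrite ler_pM2r.
have exist : forall u, W u -> exists2 p, O p & psi (u, p) = 0.
  move=> u hu.
  pose K := ball vbar r.
  have hmK : forall x y, K x -> K y ->
      tau * ip (x - y) (x - y) <= ip (psi (u, x) - psi (u, y)) (x - y).
    by move=> x y hx hy; rewrite ipn; exact: hmon (WBU _ hu) (hr _ hx) (hr _ hy).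
  have Kv : K vbar by apply: ballxx.
  have [p hp] := @exists_sol R V ip hV (fun x => psi (u, x)) tau K vbar tau0 hmK Kv.
  have hud : `|u - ubar| < rho' by rewrite distrC -ballN.
  have hFv : `|psi (u, vbar)| < tau * r / 4.
    have := hL vbar u ubar (hr _ Kv); rewrite hzero subr0 => h.
    pose X := tau * r / (4 * (L + 1)).
    have X0 : 0 < X by rewrite /X !mulr_gt0 // ?invr_gt0 // mulr_gt0 //; lra.
    have L10 : 0 < L + 1 by lra.
    have hX : (L + 1) * X = tau * r / 4.
      by rewrite /X; field; rewrite lt0r_neq0.
    have h1 : L * `|u - ubar| <= L * X.
      by rewrite ler_wpM2l //; apply: le_trans rho'le2; rewrite ltW.
    lra.
  have hpO : O p.
    have h := hp vbar Kv; rewrite ipn in h.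
    have h2 := @ip_CS R V ip hV (psi (u, vbar)) (vbar - p).
    rewrite /O ballN /r'.
    have [dz|dp] := eqVneq `|vbar - p| 0.
      by rewrite dz divr_gt0.
    have dp' : 0 < `|vbar - p| by rewrite lt0r dp normr_ge0.
    have h3 : tau / 2 * `|vbar - p| * `|vbar - p| <= `|psi (u, vbar)| * `|vbar - p|.
      by rewrite -mulrA -expr2; lra.
    rewrite ler_pM2r // in h3.
    have h4 : tau * (2 * `|vbar - p|) < tau * r by lra.
    rewrite ltr_pM2l // in h4.
    lra.
  exists p => //.
  have [//|ha] := eqVneq (psi (u, p)) 0.
  exfalso.
  set a := psi (u, p) in ha.
  have a0 : 0 < `|a| by rewrite normr_gt0.
  have hint : (BU `*` BV)° (u, p).
    rewrite /interior /=.
    apply/nbhs_ballP.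
    have hpO' := hpO; rewrite /O ballN in hpO'.
    pose e := Num.min (rho - `|ubar - u|) r'.
    have hu' : `|ubar - u| < rho by rewrite -ballN; apply: le_ball hu.
    exists e.
      by rewrite /= lt_min r'0 andbT subr_gt0.
    move=> [x y] [/= hx hy]; split.
      apply: hrho; rewrite ballN.
      apply: le_lt_trans (ler_distD u _ _) _.
      rewrite ballN in hx.
      have : e <= rho - `|ubar - u| by rewrite ge_min lexx.
      lra.
    apply: hr; rewrite ballN.
    apply: le_lt_trans (ler_distD p _ _) _.
    rewrite ballN in hy.
    have : e <= r' by rewrite ge_min lexx orbT.
    rewrite /r' in hpO' *; lra.
  have hc := hcont (u, p).
  rewrite /continuous_at -(nbhs_subspace_interior hint) in hc.
  have ha2 : 0 < `|a| / 2 by rewrite divr_gt0.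
  move: hc => /cvgr_dist_lt /(_ _ ha2).
  move=> /nbhs_ballP [d d0 hd].
  pose e0 := Num.min d r'.
  have e00 : 0 < e0 by rewrite lt_min d0 r'0.
  pose s := e0 / (`|a| + 1).
  have s0 : 0 < s by rewrite divr_gt0 //; lra.
  have sa : s * `|a| < e0.
    rewrite /s mulrAC ltr_pdivrMr; last lra.
    rewrite ltr_pM2l //; lra.
  have e0d : e0 <= d by rewrite ge_min lexx.
  have e0r : e0 <= r' by rewrite ge_min lexx orbT.
  pose w := p - s *: a.
  have hpw : `|p - w| = s * `|a|.
    by rewrite /w opprB addrC subrK normrZ gtr0_norm.
  have Kw : K w.
    rewrite /K ballN; apply: le_lt_trans (ler_distD p _ _) _.
    have hpO' := hpO; rewrite /O ballN in hpO'.
    rewrite hpw; rewrite /r' in hpO' e0r; lra.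
  have hw := hp w Kw.
  have wp : w - p = - (s *: a) by rewrite /w addrAC subrr add0r.
  rewrite wp (@ipNr R V ip hV) (@ipZr R V ip hV) in hw.
  have hge := @ip_ge0 R V ip hV (- (s *: a)).
  have hw2 : s * ip (psi (u, w)) a <= 0.
    have : 0 <= tau / 2 * ip (- (s *: a)) (- (s *: a)) by rewrite mulr_ge0 // divr_ge0 // ltW.
    lra.
  rewrite pmulr_rle0 // in hw2.
  have hclose : `|psi (u, p) - psi (u, w)| < `|a| / 2.
    apply: (hd (u, w)); split => /=; first exact: ballxx.
    rewrite ballN hpw; lra.
  rewrite -/a in hclose.
  have hcs := @ip_CS R V ip hV (a - psi (u, w)) a.
  have e1 : ip (psi (u, w)) a = ip a a - ip (a - psi (u, w)) a.
    rewrite (@ipDl R V ip hV) (@ipNl R V ip hV); ring.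
  rewrite e1 ipn in hw2.
  have : `|a - psi (u, w)| * `|a| <= `|a| / 2 * `|a| by rewrite ler_wpM2r // ltW.
  rewrite expr2 in hw2.
  nra.
have hsv : sv_localization_on S ubar vbar W O.
  split; first exact: nbhsx_ballx.
  split; first exact: nbhsx_ballx.
  move=> u hu; have [p hpO hp0] := exist u hu.
  exists p; split => //.
  move=> v [hv hvO].
  have h := uniq u u p v hu hu hpO hvO hp0 hv.
  rewrite subrr normr0 mulr0 pmulr_rle0 // in h.
  apply/eqP; rewrite -subr_eq0 -normr_eq0 eq_le h /=.
  exact: normr_ge0.
split; split => //.
  by exists W, O.
exists W, O; split => //.
exists (L / tau) => u1 u2 v1 v2 hu1 hu2 hv1 hO1 hv2 hO2.
have h := uniq u1 u2 v1 v2 hu1 hu2 hO1 hO2 hv1 hv2.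
rewrite mulrAC ler_pdivlMr // mulrC //.
Qed.
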